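(* Let $n,m\in\mathbb N$, $d:=\min\{n,m\}$, fix an integer $k\in\{1,\dots,d-1\}$ and $\theta\in(0,1)$, and set $\alpha:=k+\theta$. Then $\mathsf P_\alpha$ is not stable under completely positive post-composition: there exist a Hermitian-preserving map $\Phi:\mathbb M_n\to\mathbb M_m$ with $\Phi\in\mathsf P_\alpha$ and a completely positive map $\Gamma:\mathbb M_m\to\mathbb M_m$ such that $\Gamma\circ\Phi\notin\mathsf P_\alpha$. More precisely, if $\Phi\in\mathsf P_\alpha\setminus\mathsf P_{k+1}$, then there exists $A\in\mathbb M_m$ such that $\mathrm{Ad}_A\circ\Phi\notin\mathsf P_\alpha$, where $\mathrm{Ad}_A(Y)=AYA^\ast$.
   Context: The Choi matrix of a linear $\Phi:\mathbb M_n\to\mathbb M_m$ is $C_\Phi=\sum_{i,j=1}^nE_{ij}\otimes\Phi(E_{ij})$, with $E_{ij}$ the matrix units of $\mathbb M_n$. For $\psi=\sum_{i,j}a_{ij}e_i\otimes f_j\in\mathbb C^n\otimes\mathbb C^m$ (standard bases), its Schmidt coefficients $s_1(\psi)\ge\dots\ge s_d(\psi)\ge0$ are the singular values of $[a_{ij}]$. For $\beta\in[1,d]$ with $k'=\lfloor\beta\rfloor$, $\theta'=\beta-k'$, $r'=\lceil\beta\rceil$, a unit vector $\psi$ is $\beta$-admissible if $s_j(\psi)=0$ for $j\ge r'+1$ and, when $\theta'>0$, $s_{k'+1}(\psi)\le\frac{\theta'}{k'}\sum_{j=1}^{k'}s_j(\psi)$; $\mathcal V_\beta$ is the set of these. A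 Hermitian-preserving map $\Phi$ belongs to $\mathsf P_\beta$ ($\beta$-positive) if $\langle\psi,C_\Phi\psi\rangle\ge0$ for all $\psi\in\mathcal V_\beta$. (For integer $\beta$ this is $\beta$-positivity in the usual sense.) *)

(* Defs.v *)
From HB Require Import structures.
From mathcomp Require Import all_boot all_order all_algebra.
From mathcomp Require Import algC.
Set Implicit Arguments. Unset Strict Implicit. Unset Printing Implicit Defensive.
Import Order.TTheory GRing.Theory Num.Theory Num.Def.
Local Open Scope ring_scope.

Definition adjmx {p q : nat} (M : 'M[algC]_(p, q)) : 'M[algC]_(q, p) :=
  (map_mx conjC M)^T.

(* inverse of mxvec_index : 'I_(p*q) -> 'I_p * 'I_q;
   index mxvec_index i j  <->  basis vector e_i (x) f_j *)
Definition tens_pair {p q : nat} (k : 'I_(p * q)) : 'I_p * 'I_q :=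
  enum_val (cast_ord (esym (mxvec_cast p q)) k).

Definition matunit {n : nat} (i j : 'I_n) : 'M[algC]_n := delta_mx i j.

(* Choi matrix C_Phi = sum_{i,j} E_ij (x) Phi(E_ij); its entry at
   (e_i (x) f_a , e_j (x) f_b) is Phi(E_ij)_{ab}. *)
Definition choi {n m : nat} (Phi : 'M[algC]_n -> 'M[algC]_m) : 'M[algC]_(n * m) :=
  \matrix_(p, q) Phi (matunit (tens_pair p).1 (tens_pair q).1)
                      (tens_pair p).2 (tens_pair q).2.

Definition qform {N : nat} (X : 'M[algC]_N) (psi : 'rV[algC]_N) : algC :=
  (map_mx conjC psi *m X *m psi^T) 0 0.

Definition unit_vector {N : nat} (psi : 'rV[algC]_N) : Prop :=
  (psi *m adjmx psi) 0 0 = 1.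

Definition singular_values {p q : nat} (M : 'M[algC]_(p, q)) (s : seq algC) : Prop :=
  [/\ size s = minn p q, all (fun x => 0 <= x) s, sorted (fun x y => y <= x) s &
   exists (U : 'M[algC]_p) (V : 'M[algC]_q),
     [/\ U *m adjmx U = 1%:M, V *m adjmx V = 1%:M &
       M = U *m (\matrix_(i, j) (if (i : nat) == j then s`_i else 0)) *m adjmx V]].

(* Schmidt coefficients of psi in C^n (x) C^m: singular values of the
   coefficient matrix [a_ij], a_ij = coefficient of e_i (x) f_j. *)
Definition schmidt_coeffs {n m : nat} (psi : 'rV[algC]_(n * m)) (s : seq algC) : Prop :=
  singular_values (vec_mx psi) s.

(* beta-admissible unit vectors (s`_j is s_{j+1} of the paper) *)
Definition admissible {n m : nat} (beta : algC) (psi : 'rV[algC]_(n * m)) : Prop :=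
  let k' := Num.truncn beta in
  let theta' := beta - k'%:R in
  let r' := `|Num.ceil beta|%N in
  unit_vector psi /\
  exists s, [/\ schmidt_coeffs psi s,
     (forall j, (r' <= j)%N -> s`_j = 0) &
     (0 < theta' -> s`_k' <= theta' / k'%:R * \sum_(j < k') s`_j)].

Definition herm_preserving {n m : nat} (Phi : 'M[algC]_n -> 'M[algC]_m) : Prop :=
  forall X, Phi (adjmx X) = adjmx (Phi X).

Definition Pbeta {n m : nat} (beta : algC) (Phi : 'M[algC]_n -> 'M[algC]_m) : Prop :=
  herm_preserving Phi /\
  forall psi : 'rV[algC]_(n * m), admissible beta psi -> 0 <= qform (choi Phi) psi.

Definition psd {N : nat} (X : 'M[algC]_N) : Prop := forall v, 0 <= qform X v.

(* id_k (x) Gamma acting on 'M_(k*m) = M_k (x) M_m *)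
Definition ampliate {m m' : nat} (k : nat) (Gamma : 'M[algC]_m -> 'M[algC]_m')
  (X : 'M[algC]_(k * m)) : 'M[algC]_(k * m') :=
  \matrix_(p, q)
    Gamma (\matrix_(a, b) X (mxvec_index (tens_pair p).1 a)
                            (mxvec_index (tens_pair q).1 b))
          (tens_pair p).2 (tens_pair q).2.

Definition completely_positive {m m' : nat} (Gamma : 'M[algC]_m -> 'M[algC]_m') : Prop :=
  forall (k : nat) (X : 'M[algC]_(k * m)), psd X -> psd (ampliate Gamma X).

Definition Ad {m : nat} (A : 'M[algC]_m) (Y : 'M[algC]_m) : 'M[algC]_m :=
  A *m Y *m adjmx A.

(* Main.v *)
Require Import Defs.
From HB Require Import structures.
From mathcomp Require Import all_boot all_order all_algebra.
From mathcomp Require Import algC.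
From Stdlib Require Import Classical.
From mathcomp Require Import ring.
Import Order.TTheory GRing.Theory Num.Theory Num.Def.
Local Open Scope ring_scope.
Set Implicit Arguments. Unset Strict Implicit. Unset Printing Implicit Defensive.

Lemma tpK N M (p : 'I_(N*M)) : mxvec_index (tens_pair p).1 (tens_pair p).2 = p.
Proof. by rewrite /tens_pair /mxvec_index -surjective_pairing enum_valK cast_ordKV. Qed.

Lemma tpE N M (i : 'I_N) (a : 'I_M) : tens_pair (mxvec_index i a) = (i, a).
Proof. by rewrite /tens_pair /mxvec_index cast_ordK enum_rankK. Qed.

Lemma sum_tp N M (F : 'I_N -> 'I_M -> algC) :
  \sum_(p < N*M) F (tens_pair p).1 (tens_pair p).2 = \sum_i \sum_a F i a.
Proof.
rewrite pair_big /= (reindex (fun u : 'I_N * 'I_M => mxvec_index u.1 u.2)) /=.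
  by apply: eq_bigr => u _; rewrite tpE.
exists (@tens_pair N M) => u _; first by rewrite tpE -surjective_pairing.
exact: tpK.
Qed.

Lemma vecE N M (psi : 'rV[algC]_(N*M)) p :
  psi 0 p = vec_mx psi (tens_pair p).1 (tens_pair p).2.
Proof. by rewrite mxE tpK. Qed.

Definition blk N M (G : 'I_N -> 'I_N -> 'M[algC]_M) : 'M[algC]_(N*M) :=
  \matrix_(p, q) G (tens_pair p).1 (tens_pair q).1 (tens_pair p).2 (tens_pair q).2.

Lemma qform_blk N M (G : 'I_N -> 'I_N -> 'M[algC]_M) psi :
  qform (blk G) psi = \sum_i \sum_j
   ((map_mx conjC (row i (vec_mx psi))) *m G i j *m (row j (vec_mx psi))^T) 0 0.
Proof.
set X := vec_mx psi.
rewrite /qform mxE.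
transitivity (\sum_(q < N*M) \sum_(p < N * M)
   (conjC (X (tens_pair p).1 (tens_pair p).2) *
    G (tens_pair p).1 (tens_pair q).1 (tens_pair p).2 (tens_pair q).2 *
    X (tens_pair q).1 (tens_pair q).2)).
  apply: eq_bigr => q _; rewrite !mxE big_distrl /=; apply: eq_bigr => p _.
  by rewrite !mxE !tpK.
rewrite (sum_tp (fun j b => \sum_(p < N * M)
   (conjC (X (tens_pair p).1 (tens_pair p).2) *
    G (tens_pair p).1 j (tens_pair p).2 b * X j b))).
under eq_bigr => j _ do under eq_bigr => b _ do
  rewrite (sum_tp (fun i a => conjC (X i a) * G i j a b * X j b)).
under eq_bigr => j _ do rewrite exchange_big.
rewrite exchange_big; apply: eq_bigr => i _; apply: eq_bigr => j _.
rewrite mxE; apply: eq_bigr => b _; rewrite !mxE big_distrl; apply: eq_bigr => a _.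
by rewrite !mxE.
Qed.

Lemma qform_Ad N M (G : 'I_N -> 'I_N -> 'M[algC]_M) (A : 'M[algC]_M) psi :
  qform (blk (fun i j => A *m G i j *m adjmx A)) psi =
  qform (blk G) (mxvec (vec_mx psi *m map_mx conjC A)).
Proof.
rewrite !qform_blk mxvecK; apply: eq_bigr => i _; apply: eq_bigr => j _.
rewrite !row_mul map_mxM trmx_mul /adjmx.
have -> : map_mx conjC (map_mx conjC A) = A.
  by apply/matrixP => a b; rewrite !mxE conjCK.
by rewrite !mulmxA.
Qed.

Lemma blk_block N M (X : 'M[algC]_(N*M)) :
  blk (fun i j => \matrix_(a,b) X (mxvec_index i a) (mxvec_index j b)) = X.
Proof. by apply/matrixP => p q; rewrite !mxE !tpK. Qed.

Lemma Ad_CP m (A : 'M[algC]_m) : completely_positive (Ad A).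
Proof.
move=> k X HX v.
change (0 <= qform (blk (fun i j => A *m (\matrix_(a,b) X (mxvec_index i a)
   (mxvec_index j b)) *m adjmx A)) v).
by rewrite qform_Ad blk_block; apply: HX.
Qed.

Lemma Ad_lin m (A : 'M[algC]_m) : linear (Ad A).
Proof. by move=> a u v; rewrite /Ad mulmxDr mulmxDl -scalemxAr -scalemxAl. Qed.

Definition AdL m (A : 'M[algC]_m) : {linear 'M[algC]_m -> 'M[algC]_m} :=
  HB.pack (Ad A) (GRing.isLinear.Build _ _ _ _ (Ad A) (Ad_lin A)).

Lemma AdLE m (A : 'M[algC]_m) : (AdL A : 'M_m -> 'M_m) = Ad A.
Proof. by []. Qed.

Lemma adjmxM p q r (A : 'M[algC]_(p,q)) (B : 'M[algC]_(q,r)) :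
  adjmx (A *m B) = adjmx B *m adjmx A.
Proof. by rewrite /adjmx map_mxM trmx_mul. Qed.

Lemma adjmxK p q (A : 'M[algC]_(p,q)) : adjmx (adjmx A) = A.
Proof. by apply/matrixP => i j; rewrite !mxE conjCK. Qed.

Lemma delta_entry p q r (A : 'M[algC]_(p,q)) (B : 'M[algC]_(q,r)) (i j : 'I_q) a b :
  (A *m (delta_mx i j : 'M_q) *m B) a b = A a i * B j b.
Proof.
rewrite -[delta_mx i j](mul_delta_mx (0:'I_1)) mulmxA -colE -mulmxA -rowE.
by rewrite mxE big_ord1 !mxE.
Qed.

Definition dgm n m (s : seq algC) : 'M[algC]_(n,m) :=
  \matrix_(i, j) (if (i : nat) == j then s`_i else 0).

Lemma diag_sum n m k (g : nat -> algC) : (k < n)%N -> (k < m)%N ->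
  (forall j, (k < j)%N -> g j = 0) ->
  \sum_(i < n) \sum_(l < m) (if (i : nat) == l then g i else 0) = \sum_(j < k.+1) g j.
Proof.
move=> kn km gz.
transitivity (\sum_(i < n) g i).
  apply: eq_bigr => i _.
  case: (leqP i k) => hi.
  - have im : (i < m)%N by apply: leq_ltn_trans hi km.
    rewrite (bigD1 (Ordinal im)) //= eqxx big1 ?addr0 // => l hl.
    case: eqP => // hil; case/eqP: hl; apply: val_inj; by rewrite /= -hil.
  - by rewrite gz // big1 // => l _; case: ifP.
rewrite (big_ord_widen _ g kn) [RHS]big_mkcond; apply: eq_bigr => i _.
case: ifP => // /negbT; rewrite -leqNgt => h; by rewrite gz.
Qed.

Lemma nth_ge0 (s : seq algC) j : all (fun x => 0 <= x) s -> 0 <= s`_j.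
Proof.
move=> /all_nthP h; case: (ltnP j (size s)) => hj; first exact: h.
by rewrite nth_default.
Qed.

Lemma svd_nrm n m (M : 'M[algC]_(n,m)) U V s :
  U *m adjmx U = 1%:M -> V *m adjmx V = 1%:M -> M = U *m dgm n m s *m adjmx V ->
  \tr (M *m adjmx M) = \tr (dgm n m s *m adjmx (dgm n m s)).
Proof.
move=> hU hV ->; have hU' := mulmx1C hU; have hV' := mulmx1C hV.
rewrite !adjmxM adjmxK !mulmxA -(mulmxA (U *m dgm n m s)) hV' mulmx1.
by rewrite mxtrace_mulC !mulmxA hU' mul1mx.
Qed.

Lemma tr_dgm n m s : all (fun x => 0 <= x) s ->
  \tr (dgm n m s *m adjmx (dgm n m s)) =
  \sum_(i < n) \sum_(l < m) (if (i : nat) == l then s`_i ^+ 2 else 0).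
Proof.
move=> hs; rewrite /mxtrace; apply: eq_bigr => i _; rewrite mxE.
apply: eq_bigr => l _; rewrite !mxE; case: ifP => _; last by rewrite mul0r.
by rewrite geC0_conj ?nth_ge0.
Qed.

Definition Rk n m k : 'M[algC]_(m,n) :=
  \matrix_(a, i) ((a == i :> nat) && (a <= k)%N)%:R.

Lemma sum_ind_le1 N (c : nat) (b : nat -> bool) :
  \sum_(j < N) ((j == c :> nat) && b j)%:R <= 1 :> algC.
Proof.
case: (ltnP c N) => h.
- rewrite (bigD1 (Ordinal h)) //= eqxx big1 ?addr0; first by case: (b c).
  move=> j hj; rewrite (_ : (j == c :> nat) = false) //; apply/negbTE.
  by apply: contra hj => /eqP e; apply/eqP/val_inj.
- rewrite big1 ?ler01 // => j _; rewrite ltn_eqF //.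
  exact: leq_trans (ltn_ord j) h.
Qed.

Lemma amgm (x y : algC) : 0 <= x -> 0 <= y -> x * y <= (x ^+ 2 + y ^+ 2) / 2.
Proof.
move=> hx hy; rewrite -subr_ge0.
have -> : (x ^+ 2 + y ^+ 2) / 2 - x * y = (x - y) ^+ 2 / 2.
  by field; rewrite ?pnatr_eq0 // (eqC_nat 2 0).
rewrite -real_normK ?rpredB ?ger0_real //.
by apply: divr_ge0; [apply: exprn_ge0 | apply: ler0n].
Qed.

Lemma cs_sum k (a : nat -> algC) : (forall j, 0 <= a j) ->
  (\sum_(j < k) a j) ^+ 2 <= k%:R * \sum_(j < k) a j ^+ 2.
Proof.
move=> a0; elim: k => [|k IH]; first by rewrite !big_ord0 expr0n /= mul0r.
rewrite !big_ord_recr /=.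
set S := \sum_(j < k) a j; set Q := \sum_(j < k) a j ^+ 2.
have H : 2 * S * a k <= Q + k%:R * a k ^+ 2.
  have -> : k%:R * a k ^+ 2 = \sum_(j < k) a k ^+ 2.
    by rewrite sumr_const card_ord mulr_natl.
  rewrite /S /Q -big_split /= mulr_sumr mulr_suml; apply: ler_sum => j _.
  have := amgm (a0 j) (a0 k); rewrite ler_pdivlMr ?ltr0n // => h.
  by rewrite -mulrA mulrC.
have -> : (S + a k) ^+ 2 = S ^+ 2 + 2 * S * a k + a k ^+ 2 by ring.
have -> : k.+1%:R * (Q + a k ^+ 2) = k%:R * Q + (Q + k%:R * a k ^+ 2) + a k ^+ 2.
  by rewrite -addn1 natrD; ring.
by rewrite lerD2r lerD.
Qed.

Lemma key_ineq (K th S x Q : algC) : 1 <= K -> 0 < th -> th < 1 -> 0 <= S -> 0 <= x ->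
  K * x <= th * S -> S ^+ 2 <= K * Q ->
  (K + th ^+ 2) / (K + th) ^+ 2 * (S + x) ^+ 2 <= Q + x ^+ 2.
Proof.
move=> K1 th0 th1 S0 x0 hx hQ.
have K0 : 0 < K by apply: lt_le_trans K1; exact: ltr01.
have Kt : 0 < K + th by apply: addr_gt0.
have Kt2 : 0 < (K + th) ^+ 2 by apply: exprn_gt0.
set al := 2 * K * th + th ^+ 2 - K * th ^+ 2.
set be := th * K * (K - 1 + 2 * th).
set D := (K + th) ^+ 2 * (S ^+ 2 + K * x ^+ 2) - K * (K + th ^+ 2) * (S + x) ^+ 2.
have h1 : 0 <= th * S - K * x by rewrite subr_ge0.
have hK1 : 0 <= K - 1 + 2 * th.
  apply: addr_ge0; first by rewrite subr_ge0.
  by apply: mulr_ge0; [apply: ler0n | apply: ltW].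
have h2 : 0 <= al * S - be * x.
  have -> : al * S - be * x = 2 * th * (K + th) * (1 - th) * S + th * (K - 1 + 2 * th) * (th * S - K * x).
    by rewrite /al /be; ring.
  apply: addr_ge0; apply: mulr_ge0 => //.
    apply: mulr_ge0; last by rewrite subr_ge0 ltW.
    apply: mulr_ge0; last exact: ltW.
    by apply: mulr_ge0; [apply: ler0n | apply: ltW].
  exact: mulr_ge0 (ltW th0) hK1.

have hD : 0 <= D.
  have : 0 <= th * D.
    have -> : th * D = (th * S - K * x) * (al * S - be * x) by rewrite /D /al /be; ring.
    exact: mulr_ge0.
  by rewrite pmulr_rge0.
rewrite mulrAC ler_pdivrMr // -(ler_pM2l K0) -subr_ge0.
have -> : K * ((Q + x ^+ 2) * (K + th) ^+ 2) - K * ((K + th ^+ 2) * (S + x) ^+ 2) =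
   (K + th) ^+ 2 * (K * Q - S ^+ 2) + D by rewrite /D; ring.
apply: addr_ge0 => //; apply: mulr_ge0; [exact: ltW | by rewrite subr_ge0].
Qed.


Lemma Qbound n m k (U : 'M[algC]_n) (V : 'M[algC]_m) :
  adjmx U *m U = 1%:M -> adjmx V *m V = 1%:M ->
  forall l r, `|(adjmx V *m Rk n m k *m U) l r| <= 1.
Proof.
move=> hU hV l r.
have eV : \sum_a `|V a l| ^+ 2 = 1.
  have := congr1 (fun M : 'M[algC]_m => M l l) hV; rewrite !mxE eqxx /= => H; apply: etrans H.
  by apply: eq_bigr => a _; rewrite !mxE normCKC.
have eU : \sum_i `|U i r| ^+ 2 = 1.
  have := congr1 (fun M : 'M[algC]_n => M r r) hU; rewrite !mxE eqxx /= => H; apply: etrans H.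
  by apply: eq_bigr => a _; rewrite !mxE normCKC.
pose R := Rk n m k.
have R0 : forall a i, 0 <= R a i by move=> a i; rewrite mxE ler0n.
rewrite mxE.
apply: le_trans (ler_norm_sum _ _ _) _.
apply: (@le_trans _ _ (\sum_i \sum_a (R a i * (`|V a l| ^+ 2 / 2) + R a i * (`|U i r| ^+ 2 / 2)))).
  apply: ler_sum => i _; rewrite mxE big_distrl /=.
  apply: le_trans (ler_norm_sum _ _ _) _; apply: ler_sum => a _.
  rewrite !mxE normrM normrM norm_conjC ger0_norm ?ler0n //.
  rewrite mulrAC mulrC -mulrDr -mulrDl; apply: ler_wpM2l; first exact: ler0n.
  by apply: amgm.
have h1 : \sum_(i < n) \sum_a R a i * `|V a l| ^+ 2 <= 1.
  rewrite exchange_big -eV; apply: ler_sum => a _; rewrite -mulr_suml mulrC.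
  apply: ler_piMr; first exact: exprn_ge0.
  rewrite (eq_bigr (fun i : 'I_n => ((i == a :> nat) && (a <= k)%N)%:R)).
    exact: (sum_ind_le1 n a (fun _ => (a <= k)%N)).
  by move=> i _; rewrite mxE eq_sym.
have h2 : \sum_(i < n) \sum_a R a i * `|U i r| ^+ 2 <= 1.
  apply: (@le_trans _ _ (\sum_(i < n) `|U i r| ^+ 2)); last by rewrite eU.
  apply: ler_sum => i _; rewrite -mulr_suml mulrC.
  apply: ler_piMr; first exact: exprn_ge0.
  rewrite (eq_bigr (fun a : 'I_m => ((a == i :> nat) && (a <= k)%N)%:R)).
    exact: (sum_ind_le1 m i (fun a => (a <= k)%N)).
  by move=> a _; rewrite mxE.
have -> : \sum_i \sum_a (R a i * (`|V a l| ^+ 2 / 2) + R a i * (`|U i r| ^+ 2 / 2)) =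
   (\sum_(i < n) \sum_a R a i * `|V a l| ^+ 2 + \sum_(i < n) \sum_a R a i * `|U i r| ^+ 2) / 2.
  rewrite mulrDl !mulr_suml -big_split; apply: eq_bigr => i _.
  rewrite !mulr_suml -big_split; apply: eq_bigr => a _; by rewrite !mulrA.
rewrite ler_pdivrMr ?ltr0n // mul1r.
by apply: le_trans (lerD h1 h2) _.
Qed.

Lemma tau_bound n m k (U : 'M[algC]_n) (V : 'M[algC]_m) s :
  U *m adjmx U = 1%:M -> V *m adjmx V = 1%:M -> all (fun x => 0 <= x) s ->
  `|\tr (Rk n m k *m (U *m dgm n m s *m adjmx V))| <=
    \sum_(i < n) \sum_(l < m) (if (i : nat) == l then s`_i else 0).
Proof.
move=> hU hV hs; have hU' := mulmx1C hU; have hV' := mulmx1C hV.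
rewrite mulmxA mxtrace_mulC !mulmxA /mxtrace exchange_big /=.
apply: le_trans (ler_norm_sum _ _ _) _; apply: ler_sum => l _.
rewrite mxE; apply: le_trans (ler_norm_sum _ _ _) _; apply: ler_sum => i _.
have D0 : 0 <= dgm n m s i l by rewrite mxE; case: ifP => _ //; apply: nth_ge0.
rewrite normrM (ger0_norm D0); rewrite [X in _ <= X](_ : _ = dgm n m s i l); last by rewrite mxE.
by apply: ler_piMl => //; apply: Qbound.
Qed.

Definition PhiF n m k (t : algC) (X : 'M[algC]_n) : 'M[algC]_m :=
  \tr X *: 1%:M - t *: (Rk n m k *m X *m (Rk n m k)^T).
Arguments PhiF : clear implicits.

Lemma PhiF_lin n m k t : linear (PhiF n m k t).
Proof.
move=> a X Y; rewrite /PhiF mxtraceD mxtraceZ mulmxDr mulmxDl -scalemxAr -scalemxAl.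
by apply/matrixP => u v; rewrite !mxE; ring.
Qed.

Definition PhiL n m k t : {linear 'M[algC]_n -> 'M[algC]_m} :=
  HB.pack (PhiF n m k t) (GRing.isLinear.Build _ _ _ _ (PhiF n m k t) (@PhiF_lin n m k t)).

Lemma Rk_real n m k : map_mx conjC (Rk n m k) = Rk n m k.
Proof. by apply/matrixP => a i; rewrite !mxE conjC_nat. Qed.

Lemma PhiF_herm n m k t : 0 <= t -> herm_preserving (PhiF n m k t).
Proof.
move=> t0 X; rewrite /PhiF.
have -> : Rk n m k *m adjmx X *m (Rk n m k)^T = adjmx (Rk n m k *m X *m (Rk n m k)^T).
  have hRt : adjmx (Rk n m k)^T = Rk n m k.
    by apply/matrixP => a b; rewrite !mxE conjC_nat.
  have hR : adjmx (Rk n m k) = (Rk n m k)^T.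
    by apply/matrixP => a b; rewrite !mxE conjC_nat.
  by rewrite !adjmxM hRt hR mulmxA.
have -> : \tr (adjmx X) = conjC (\tr X).
  by rewrite /mxtrace rmorph_sum; apply: eq_bigr => i _; rewrite !mxE.
set Z := Rk n m k *m X *m (Rk n m k)^T.
apply/matrixP => u v; rewrite !mxE rmorphB !rmorphM /= (geC0_conj t0) conjC_nat eq_sym.
by [].
Qed.

Lemma tr_delta n (i j : 'I_n) : \tr (delta_mx i j : 'M[algC]_n) = (i == j)%:R.
Proof.
rewrite /mxtrace (bigD1 i) //= big1 ?addr0; first by rewrite mxE eqxx.
by move=> l hl; rewrite mxE (negbTE hl).
Qed.

Lemma nrm_vec N M (psi : 'rV[algC]_(N*M)) :
  (psi *m adjmx psi) 0 0 = \sum_i \sum_a conjC (vec_mx psi i a) * vec_mx psi i a.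
Proof.
rewrite mxE -(sum_tp (fun i a => conjC (vec_mx psi i a) * vec_mx psi i a)).
by apply: eq_bigr => p _; rewrite !mxE tpK mulrC.
Qed.

Lemma qform_Phi n m k t psi :
  qform (choi (PhiF n m k t)) psi =
  (psi *m adjmx psi) 0 0 - t * `|\tr (Rk n m k *m vec_mx psi)| ^+ 2.
Proof.
set M := vec_mx psi.
rewrite (_ : choi (PhiF n m k t) = blk (fun i j => PhiF n m k t (matunit i j))) //.
rewrite qform_blk nrm_vec.
have E : forall i j, (map_mx conjC (row i M) *m PhiF n m k t (matunit i j) *m (row j M)^T) 0 0 =
   (i == j)%:R * (\sum_a conjC (M i a) * M j a) -
   t * ((\sum_a conjC (M i a) * Rk n m k a i) * (\sum_b Rk n m k b j * M j b)).
  move=> i j; rewrite /PhiF /matunit tr_delta mulmxBr mulmxBl -!scalemxAr -!scalemxAl mulmx1.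
  have HT := delta_entry (map_mx conjC (row i M) *m Rk n m k) ((Rk n m k)^T *m (row j M)^T) i j 0 0.
  rewrite mxE in HT.
  rewrite !mulmxA -(mulmxA _ (Rk n m k)^T) !mxE HT !mxE; congr (_ * _ - _ * (_ * _)).
  - by apply: eq_bigr => a _; rewrite !mxE.
  - by apply: eq_bigr => a _; rewrite !mxE.
  - by apply: eq_bigr => a _; rewrite !mxE.
transitivity (\sum_i \sum_j ((i == j)%:R * (\sum_a conjC (M i a) * M j a) -
   t * ((\sum_a conjC (M i a) * Rk n m k a i) * (\sum_b Rk n m k b j * M j b)))).
  by apply: eq_bigr => i _; apply: eq_bigr => j _; exact: E.
rewrite (eq_bigr _ (fun i _ => sumrB _ _ _ _)) sumrB; congr (_ - _).
  apply: eq_bigr => i _; rewrite (bigD1 i) //= eqxx mul1r [X in _ + X]big1 ?addr0 //.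
  by move=> j hj; rewrite eq_sym (negbTE hj) mul0r.
have -> : \tr (Rk n m k *m M) = \sum_j \sum_b Rk n m k b j * M j b.
  by rewrite /mxtrace exchange_big; apply: eq_bigr => b _; rewrite mxE.
rewrite normCKC.
have -> : conjC (\sum_j \sum_b Rk n m k b j * M j b) = \sum_i \sum_a conjC (M i a) * Rk n m k a i.
  rewrite rmorph_sum; apply: eq_bigr => i _; rewrite rmorph_sum; apply: eq_bigr => a _.
  by rewrite rmorphM /= mulrC; congr (_ * _); rewrite !mxE conjC_nat.
rewrite mulr_suml mulr_sumr; apply: eq_bigr => i _.
rewrite mulr_sumr mulr_sumr; apply: eq_bigr => j _; by [].
Qed.

Lemma nrm_tr N M (psi : 'rV[algC]_(N*M)) :
  (psi *m adjmx psi) 0 0 = \tr (vec_mx psi *m adjmx (vec_mx psi)).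
Proof.
rewrite nrm_vec /mxtrace; apply: eq_bigr => i _; rewrite mxE.
by apply: eq_bigr => a _; rewrite !mxE mulrC.
Qed.

Lemma adjmx1 n : adjmx (1%:M : 'M[algC]_n) = 1%:M.
Proof. by apply/matrixP => i j; rewrite !mxE conjC_nat eq_sym. Qed.

Lemma nth_mk (f : nat -> algC) d j : (forall j, (d <= j)%N -> f j = 0) ->
  (mkseq f d)`_j = f j.
Proof.
move=> h; case: (ltnP j d) => hj; first by rewrite nth_mkseq.
by rewrite nth_default ?size_mkseq // h.
Qed.

Lemma sorted_mk (f : nat -> algC) d : (forall i j, (i < j)%N -> f j <= f i) ->
  sorted (fun x y => y <= x) (mkseq f d).
Proof.
move=> h; rewrite /mkseq sorted_map.
by apply: (sub_sorted _ (iota_ltn_sorted 0 d)) => i j /h.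
Qed.

Lemma trunc_alpha k (th : algC) : 0 < th -> th < 1 -> Num.truncn (k%:R + th) = k.
Proof.
move=> h0 h1; apply: truncn_def; rewrite lerDl ltW //=.
by rewrite -addn1 natrD ltrD2l.
Qed.

Lemma ceil_alpha k (th : algC) : 0 < th -> th < 1 -> `|Num.ceil (k%:R + th)|%N = k.+1.
Proof.
move=> h0 h1; rewrite (@ceil_def _ _ (k.+1 : int)) //.
have -> : (k.+1 : int) - 1 = k by rewrite -addn1 PoszD addrK.
rewrite -!pmulrn ltrDl h0 /= -addn1 natrD lerD2l ltW //.
Qed.

Lemma trunc_nat k : Num.truncn (k%:R : algC) = k.
Proof. by apply: truncn_def; rewrite lexx /= ltr_nat. Qed.

Lemma ceil_nat k : `|Num.ceil (k%:R : algC)|%N = k.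
Proof.
rewrite (@ceil_def _ _ (k : int)) // -pmulrn lexx andbT.
by rewrite rmorphB /= -pmulrn ltrBlDr ltrDl ltr01.
Qed.

Lemma Phi_Palpha n m k (th : algC) : (1 <= k)%N -> (k < minn n m)%N -> 0 < th -> th < 1 ->
  Pbeta (k%:R + th) (PhiF n m k ((k%:R + th ^+ 2) / (k%:R + th) ^+ 2)).
Proof.
move=> k1 kd th0 th1.
have kn : (k < n)%N by apply: leq_trans kd (geq_minl n m).
have km : (k < m)%N by apply: leq_trans kd (geq_minr n m).
set t := (k%:R + th ^+ 2) / (k%:R + th) ^+ 2.
have t0 : 0 <= t.
  apply: divr_ge0; last exact: exprn_ge0 (addr_ge0 (ler0n _ _) (ltW th0)).
  by apply: addr_ge0; [apply: ler0n | apply: exprn_ge0; apply: ltW].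
split; first exact: PhiF_herm.
move=> psi [hu [s [[hsz hs0 hsort [U [V [hU hV hM]]]] hz hth]]].
rewrite trunc_alpha // ceil_alpha // in hz hth.
rewrite addrAC subrr add0r in hth.
have HM : vec_mx psi = U *m dgm n m s *m adjmx V := hM.
have sz : forall j, (k < j)%N -> s`_j = 0 by move=> j hj; apply: hz.
have e1 : 1 = \sum_(j < k.+1) s`_j ^+ 2.
  rewrite -hu /unit_vector nrm_tr (svd_nrm hU hV HM) tr_dgm //.
  by rewrite (@diag_sum _ _ _ (fun j => s`_j ^+ 2) kn km) // => j /sz ->; rewrite expr0n.
have hb := tau_bound k hU hV hs0; rewrite -HM (@diag_sum _ _ _ (fun j => s`_j) kn km sz) in hb.
rewrite big_ord_recr /= in e1; rewrite big_ord_recr /= in hb.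
set S := \sum_(j < k) s`_j in e1 hb hth.
set Q := \sum_(j < k) s`_j ^+ 2 in e1.
set x := s`_k in e1 hb hth.
have x0 : 0 <= x by apply: nth_ge0.
have S0 : 0 <= S by apply: sumr_ge0 => j _; apply: nth_ge0.
have hx : k%:R * x <= th * S.
  have k0 : 0 < (k%:R : algC) by rewrite ltr0n.
  have := hth th0; rewrite -(ler_pM2l k0) => h; apply: le_trans h _.
  by rewrite mulrA mulrCA mulfV ?mulr1 // gt_eqF.
have hcs := cs_sum k (fun j => nth_ge0 j hs0).
have K1 : 1 <= (k%:R : algC) by rewrite ler1n.
have key := key_ineq K1 th0 th1 S0 x0 hx hcs.
rewrite qform_Phi hu subr_ge0.
apply: le_trans (_ : t * (S + x) ^+ 2 <= 1); last by rewrite e1.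
apply: ler_wpM2l => //; rewrite !expr2; apply: ler_pM => //.

Qed.

Lemma Phi_notP n m k (th : algC) : (1 <= k)%N -> (k < minn n m)%N -> 0 < th -> th < 1 ->
  ~ Pbeta k.+1%:R (PhiF n m k ((k%:R + th ^+ 2) / (k%:R + th) ^+ 2)).
Proof.
move=> k1 kd th0 th1 [_ H].
have kn : (k < n)%N by apply: leq_trans kd (geq_minl n m).
have km : (k < m)%N by apply: leq_trans kd (geq_minr n m).
set t := (k%:R + th ^+ 2) / (k%:R + th) ^+ 2.
set c0 : algC := (sqrtC k.+1%:R)^-1.
have c00 : 0 <= c0 by rewrite invr_ge0 sqrtC_ge0 ler0n.
pose f := fun j => if (j <= k)%N then c0 else 0.
set s0 := mkseq f (minn n m).
have fz : forall j, (minn n m <= j)%N -> f j = 0.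
  by move=> j hj; rewrite /f leqNgt (leq_trans kd hj).
have s0E : forall j, s0`_j = f j := fun j => nth_mk j fz.
have f0 : forall j, 0 <= f j by move=> j; rewrite /f; case: ifP.
have hs0 : all (fun x => 0 <= x) s0.
  by apply/(all_nthP 0) => j _; rewrite s0E.
set psi0 := mxvec (dgm n m s0).
have hM0 : vec_mx psi0 = 1%:M *m dgm n m s0 *m adjmx 1%:M.
  by rewrite mxvecK adjmx1 mul1mx mulmx1.
have h11 : forall p, (1%:M : 'M[algC]_p) *m adjmx 1%:M = 1%:M.
  by move=> p; rewrite adjmx1 mulmx1.
have hc2 : c0 ^+ 2 * k.+1%:R = 1.
  by rewrite exprVn sqrtCK mulVf // pnatr_eq0.
have hu : unit_vector psi0.
  rewrite /unit_vector nrm_tr (svd_nrm (h11 _) (h11 _) hM0) tr_dgm //.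
  rewrite (@diag_sum _ _ _ (fun j => s0`_j ^+ 2) kn km); last first.
    by move=> j hj; rewrite s0E /f leqNgt hj expr0n.
  rewrite (eq_bigr (fun _ => c0 ^+ 2)); last by move=> j _; rewrite s0E /f -ltnS ltn_ord.
  by rewrite sumr_const card_ord -mulr_natr.
have adm : admissible k.+1%:R psi0.
  split => //; exists s0; split.
  - split; first by rewrite size_mkseq.
    + exact: hs0.
    + apply: sorted_mk => i j hij; rewrite /f.
      case: ifP => hj; first by rewrite (leq_trans (ltnW hij) hj).
      by case: ifP.
    + by exists 1%:M, 1%:M; split.
  - by rewrite ceil_nat => j hj; rewrite s0E /f leqNgt hj.
  - by rewrite trunc_nat subrr ltxx.
have := H psi0 adm; rewrite qform_Phi hu.
have -> : \tr (Rk n m k *m vec_mx psi0) = c0 *+ k.+1.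
  rewrite mxvecK /mxtrace.
  rewrite (eq_bigr (fun a => \sum_i Rk n m k a i * dgm n m s0 i a)); last by move=> a _; rewrite mxE.
  rewrite exchange_big /=.
  rewrite (eq_bigr (fun i : 'I_n => \sum_(a < m) if (i : nat) == a then s0`_i else 0)).
    rewrite (@diag_sum _ _ _ (fun j => s0`_j) kn km); last first.
      by move=> j hj; rewrite s0E /f leqNgt hj.
    rewrite (eq_bigr (fun _ => c0)); last by move=> j _; rewrite s0E /f -ltnS ltn_ord.
    by rewrite sumr_const card_ord.
  move=> i _; apply: eq_bigr => a _; rewrite !mxE.
  case: (eqVneq (i : nat) a) => [e|ne]; last by rewrite mulr0.
  rewrite /= s0E /f -e; by case: (i <= k)%N => /=; rewrite ?mul1r ?mul0r ?mulr0.
rewrite ger0_norm; last by rewrite mulrn_wge0.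
have -> : (c0 *+ k.+1) ^+ 2 = k.+1%:R.
  by rewrite -[c0 *+ k.+1]mulr_natr exprMn expr2 mulrA hc2 mul1r.
rewrite subr_ge0 -subr_ge0 => h.
have hpos : 0 < t * k.+1%:R - 1.
  have -> : t * k.+1%:R - 1 = k%:R * (1 - th) ^+ 2 / (k%:R + th) ^+ 2.
    rewrite /t -[k.+1]addn1 natrD; field.
    by rewrite paddr_eq0 ?ler0n ?(ltW th0) // negb_and pnatr_eq0 -lt0n k1.
  apply: divr_gt0; last by apply: exprn_gt0; apply: ltr_wpDl; [apply: ler0n | ].
  apply: mulr_gt0; first by rewrite ltr0n.
  by apply: exprn_gt0; rewrite subr_gt0.
by move: h; rewrite -opprB oppr_ge0 (lt_geF hpos).
Qed.

Lemma part2 n m k (th : algC) (Phi : 'M[algC]_n -> 'M[algC]_m) :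
  (1 <= k)%N -> (k < minn n m)%N -> 0 < th -> th < 1 ->
  Pbeta (k%:R + th) Phi -> ~ Pbeta k.+1%:R Phi ->
  exists A : 'M[algC]_m, ~ Pbeta (k%:R + th) (Ad A \o Phi).
Proof.
move=> k1 kd th0 th1 [hH _] hn.
have [psi [hadm hneg]] : exists psi, admissible k.+1%:R psi /\ ~ (0 <= qform (choi Phi) psi).
  apply: NNPP => hc; apply: hn; split => // psi hp.
  apply: NNPP => hq; apply: hc; by exists psi.
case: hadm => hu [s [[hsz hs0 hsort [U [V [hU hV hM]]]] hz _]].
rewrite ceil_nat in hz.
have HM : vec_mx psi = U *m dgm n m s *m adjmx V := hM.
have kn : (k < n)%N by apply: leq_trans kd (geq_minl n m).
have km : (k < m)%N by apply: leq_trans kd (geq_minr n m).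
set c : algC := (sqrtC (k%:R + th ^+ 2))^-1.
have zpos : 0 < k%:R + th ^+ 2.
  by apply: ltr_wpDl; [apply: ler0n | apply: exprn_gt0].
have c0 : 0 < c by rewrite invr_gt0 sqrtC_gt0.
pose f := fun j => if (j < k)%N then c else if j == k then th * c else 0.
set cs := mkseq f (minn n m).
have fz : forall j, (k < j)%N -> f j = 0.
  by move=> j hj; rewrite /f ltnNge (ltnW hj) /= gtn_eqF.
have csE : forall j, cs`_j = f j.
  by move=> j; apply: nth_mk => i hi; apply: fz; apply: leq_trans kd hi.
have fpos : forall j, (j <= k)%N -> 0 < f j.
  move=> j hj; rewrite /f; case: ifP => // hjk.
  by rewrite eqn_leq hj /= leqNgt hjk /=; apply: mulr_gt0.
have f0 : forall j, 0 <= f j.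
  move=> j; case: (leqP j k) => hj; first exact: ltW (fpos j hj).
  by rewrite fz.
pose E : 'M[algC]_m := \matrix_(l, j) (if (l : nat) == j then s`_l / cs`_l else 0).
pose A := map_mx conjC (E *m adjmx V).
exists A => -[_ HP].
set psi' := mxvec (U *m dgm n m cs).
have hDE : dgm n m cs *m E = dgm n m s.
  apply/matrixP => i j; rewrite !mxE (bigD1 j) //= big1 ?addr0; last first.
    by move=> l hl; rewrite !mxE (_ : ((l : nat) == j) = false) ?mulr0 //; apply/negbTE.
  rewrite !mxE eqxx; case: eqP => [e|_]; last by rewrite mul0r.
  rewrite -e; case: (leqP i k) => hi.
    by rewrite csE mulrC divfK // gt_eqF // fpos.
  by rewrite (hz i hi) mul0r mulr0.
have hcs0 : all (fun x => 0 <= x) cs by apply/(all_nthP 0) => j _; rewrite csE.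
have h11 : (1%:M : 'M[algC]_m) *m adjmx 1%:M = 1%:M by rewrite adjmx1 mulmx1.
have hu' : unit_vector psi'.
  rewrite /unit_vector nrm_tr mxvecK.
  have hM' : U *m dgm n m cs = U *m dgm n m cs *m adjmx 1%:M by rewrite adjmx1 mulmx1.
  rewrite (svd_nrm hU h11 hM') tr_dgm //.
  rewrite (@diag_sum _ _ _ (fun j => cs`_j ^+ 2) kn km); last first.
    by move=> j hj; rewrite csE fz // expr0n.
  rewrite big_ord_recr /= (eq_bigr (fun _ => c ^+ 2)); last first.
    by move=> j _; rewrite csE /f ltn_ord.
  rewrite csE /f ltnn eqxx sumr_const card_ord.
  have hc : c ^+ 2 = (k%:R + th ^+ 2)^-1 by rewrite exprVn sqrtCK.
  by rewrite hc exprMn hc -mulr_natl; field; rewrite gt_eqF.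
have adm' : admissible (k%:R + th) psi'.
  split => //; exists cs; split.
  - split; first by rewrite size_mkseq.
    + exact: hcs0.
    + apply: sorted_mk => i j hij; case: (leqP j k) => hj; last by rewrite (fz j hj) f0.
      have hi : (i < k)%N by apply: leq_trans hij hj.
      rewrite {2}/f hi /f; case: ifP => _ //; case: ifP => _; last exact: ltW.
      by apply: ler_piMl; [apply: ltW | apply: ltW].
    + exists U, 1%:M; split => //; by rewrite mxvecK adjmx1 mulmx1.
  - by rewrite ceil_alpha // => j hj; rewrite csE fz.
  - rewrite trunc_alpha // addrAC subrr add0r => _.
    rewrite csE /f ltnn eqxx (eq_bigr (fun _ => c)); last by move=> j _; rewrite csE /f ltn_ord.
    rewrite sumr_const card_ord.
    have -> : th / k%:R * (c *+ k) = th * c.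
      rewrite -mulr_natr; field; by rewrite pnatr_eq0 -lt0n k1.
    exact: lexx.
have := HP psi' adm'.
rewrite (_ : choi (Ad A \o Phi) = blk (fun i j => A *m Phi (matunit i j) *m adjmx A)) // qform_Ad.
have -> : mxvec (vec_mx psi' *m map_mx conjC A) = psi.
  rewrite mxvecK (_ : map_mx conjC A = E *m adjmx V); last first.
    by apply/matrixP => a b; rewrite !mxE conjCK.
  by rewrite -mulmxA (mulmxA (dgm n m cs)) hDE mulmxA -HM vec_mxK.
exact: hneg.
Qed.

Theorem proposition3p12 (n m k : nat) (theta : algC) :
  let d := minn n m in
  (1 <= k)%N -> (k <= d - 1)%N -> 0 < theta -> theta < 1 ->
  let alpha := k%:R + theta in
  (exists (Phi : {linear 'M[algC]_n -> 'M[algC]_m})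
          (Gamma : {linear 'M[algC]_m -> 'M[algC]_m}),
      [/\ Pbeta alpha Phi, completely_positive Gamma &
          ~ Pbeta alpha (Gamma \o Phi)]) /\
  (forall Phi : {linear 'M[algC]_n -> 'M[algC]_m},
      Pbeta alpha Phi -> ~ Pbeta (k.+1)%:R Phi ->
      exists A : 'M[algC]_m, ~ Pbeta alpha (Ad A \o Phi)).
Proof.
move=> d k1 kd th0 th1 alpha.
have kd' : (k < minn n m)%N.
  move: kd; rewrite /d; case: (minn n m) => [|x] /=.
    by rewrite sub0n leqn0 => /eqP e; rewrite e in k1.
  by rewrite subSS subn0 ltnS.
split; last by move=> Phi hP hn; apply: part2 k1 kd' th0 th1 hP hn.
set t := (k%:R + theta ^+ 2) / (k%:R + theta) ^+ 2.
have [A hA] := part2 k1 kd' th0 th1 (@Phi_Palpha n m k theta k1 kd' th0 th1) (@Phi_notP n m k theta k1 kd' th0 th1).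
exists (PhiL n m k t), (AdL A); split.
- exact: Phi_Palpha.
- exact: Ad_CP.
- exact: hA.
Qed.
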